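(* Let $\alpha>0$, $\lambda\in(0,1)$, and $N(\alpha,\lambda)=\max\{[\alpha/\lambda]+1,[1/(\lambda\alpha)]+1\}$, where $[x]$ is the greatest integer $\le x$. For every integer $n\ge N(\alpha,\lambda)$, $$\binom{n}{\left[\frac{\alpha(n+1)}{\alpha+1}\right]}\alpha^{\left[\frac{\alpha(n+1)}{\alpha+1}\right]}\le\frac{M(\alpha,\lambda)}{\sqrt{2\pi}}n^{-1/2}(1+\alpha)^n,\qquad\text{where } M(\alpha,\lambda)=\frac{\alpha+1}{\sqrt\alpha}\cdot\frac{1}{1-\lambda}.$$ *)

(* Defs.v *)
From Stdlib Require Import Reals ZArith.
Open Scope R_scope.

(* [x] = greatest integer <= x; Stdlib's Int_part x = up x - 1 is exactly floor. *)
Definition floorZ (x : R) : Z := Int_part x.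

Definition Nthreshold (a l : R) : Z :=
  Z.max (floorZ (a / l) + 1) (floorZ (1 / (l * a)) + 1).

(* the index k_n = [alpha (n+1)/(alpha+1)], as a natural number (it is >= 0) *)
Definition kidx (a : R) (n : nat) : nat :=
  Z.to_nat (floorZ (a * (INR n + 1) / (a + 1))).

Definition Mconst (a l : R) : R := (a + 1) / sqrt a * (1 / (1 - l)).

(* Main.v *)
Require Import Defs.
From Stdlib Require Import Reals ZArith.
From Stdlib Require Import Reals Lra Psatz Arith Factorial.
From Coquelicot Require Import Coquelicot.
Open Scope R_scope.
Ltac inrs := repeat first [rewrite plus_INR | rewrite mult_INR | rewrite S_INR | rewrite INR_0].


Lemma logA t : 0 <= t < 1 -> 2 * t <= ln (1 + t) - ln (1 - t).
Proof.
  intros [h0 h1].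
  destruct (Req_dec t 0) as [->|hne].
  { replace (1+0) with 1 by ring; replace (1-0) with 1 by ring. rewrite ln_1; lra. }
  set (f := fun x => ln (1 + x) - ln (1 - x) - 2 * x).
  destruct (MVT_cor2 f (fun x => 1/(1+x) + 1/(1-x) - 2) 0 t) as [c [hc1 hc2]]; [lra| |].
  { intros c hc. apply is_derive_Reals. unfold f. auto_derive; [lra|]. field; lra. }
  unfold f in hc1.
  replace (1+0) with 1 in hc1 by ring; replace (1-0) with 1 in hc1 by ring. rewrite ln_1 in hc1.
  assert (0 <= 1/(1+c) + 1/(1-c) - 2).
  { replace (1/(1+c) + 1/(1-c) - 2) with (2*c*c/((1+c)*(1-c))) by (field; lra).
    apply Rmult_le_pos; [nra|]. left; apply Rinv_0_lt_compat; nra. }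
  nra.
Qed.

Lemma logB t : 0 <= t < 1 -> ln (1 + t) - ln (1 - t) <= 2 * t + 2 * t^3 / (3 * (1 - t^2)).
Proof.
  intros [h0 h1].
  destruct (Req_dec t 0) as [->|hne].
  { replace (1+0) with 1 by ring; replace (1-0) with 1 by ring. rewrite ln_1. 
    replace (2*0 + 2*0^3/(3*(1-0^2))) with 0 by field. lra. }
  set (f := fun x => 2 * x + 2 * x^3 / (3 * (1 - x^2)) - (ln (1 + x) - ln (1 - x))).
  destruct (MVT_cor2 f (fun x => 4/3 * x^4 / ((1-x^2)^2)) 0 t) as [c [hc1 hc2]]; [lra| |].
  { intros c hc. apply is_derive_Reals. unfold f. auto_derive; [repeat split; try lra; nra|].
    field; repeat split; try lra; nra. }
  unfold f in hc1.
  replace (1+0) with 1 in hc1 by ring; replace (1-0) with 1 in hc1 by ring. rewrite ln_1 in hc1.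
  assert (0 <= 4/3 * c^4 / ((1-c^2)^2)).
  { apply Rmult_le_pos; [nra|]. left; apply Rinv_0_lt_compat. assert (0 < 1 - c^2) by nra. nra. }
  replace (2*0 + 2*0^3/(3*(1-0^2))) with 0 in hc1 by field.
  nra.
Qed.
Lemma exp_le x y : x <= y -> exp x <= exp y.
Proof. intros [h|h]; [left; apply exp_increasing; exact h| subst; lra]. Qed.

Definition tau (m : nat) : R := (INR (fact m))^2 * exp (2 * INR m) / INR m ^ (2*m+1).

Lemma tau_step m : (1 <= m)%nat ->
  tau (S m) = tau m * (exp 2 * (INR m / INR (S m)) ^ (2*m+1)).
Proof.
  intros hm. unfold tau.
  assert (hm' : 0 < INR m) by (apply lt_0_INR; lia).
  rewrite fact_simpl, mult_INR, S_INR.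
  replace (2 * (S m) + 1)%nat with (S (S (2*m+1))) by lia.
  unfold Rdiv. rewrite !Rpow_mult_distr, !pow_inv.
  replace (2 * (INR m + 1)) with (2 * INR m + 2) by ring. rewrite exp_plus.
  simpl pow. field. repeat split; try apply pow_nonzero; lra.
Qed.

Lemma eq_log m : (1 <= m)%nat ->
  (INR m / INR (S m)) ^ (2*m+1) = exp (- (INR (2*m+1)) * (ln (1 + /INR (2*m+1)) - ln (1 - /INR (2*m+1)))).
Proof.
  intros hm. assert (hm' : 1 <= INR m) by (apply (le_INR 1); lia).
  rewrite S_INR.
  assert (e : INR (2*m+1) = 2 * INR m + 1) by (rewrite plus_INR, mult_INR; simpl; ring).
  rewrite e.
  rewrite <- ln_div.
  2:{ assert (0 < / (2 * INR m + 1) < 1). { split. apply Rinv_0_lt_compat; lra. rewrite <- Rinv_1. apply Rinv_lt_contravar; lra. } lra. }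
  2:{ assert (0 < / (2 * INR m + 1) < 1). { split. apply Rinv_0_lt_compat; lra. rewrite <- Rinv_1. apply Rinv_lt_contravar; lra. } lra. }
  replace ((1 + / (2 * INR m + 1)) / (1 - / (2 * INR m + 1))) with (/ (INR m / (INR m + 1))) by (field; lra).
  rewrite ln_Rinv by (apply Rdiv_lt_0_compat; lra).
  replace (- (2 * INR m + 1) * - ln (INR m / (INR m + 1))) with (INR (2*m+1) * ln (INR m / (INR m + 1))) by (rewrite e; ring).
  rewrite <- ln_pow by (apply Rdiv_lt_0_compat; lra).
  rewrite exp_ln; [reflexivity|]. apply pow_lt. apply Rdiv_lt_0_compat; lra.
Qed.

Lemma step_bounds m : (1 <= m)%nat ->
  exp 2 * (INR m / INR (S m)) ^ (2*m+1) <= 1 /\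
  exp (- / (6 * INR m * (INR m + 1))) <= exp 2 * (INR m / INR (S m)) ^ (2*m+1).
Proof.
  intros hm. assert (hm' : 1 <= INR m) by (apply (le_INR 1); lia).
  rewrite eq_log by lia. rewrite <- exp_plus.
  assert (e : INR (2*m+1) = 2 * INR m + 1) by (rewrite plus_INR, mult_INR; simpl; ring).
  rewrite e.
  set (t := / (2 * INR m + 1)).
  assert (ht : 0 <= t < 1). { unfold t. split. left; apply Rinv_0_lt_compat; lra. rewrite <- Rinv_1. apply Rinv_lt_contravar; lra. }
  assert (ht2 : t * (2 * INR m + 1) = 1) by (unfold t; field; lra).
  pose proof (logA t ht) as hA. pose proof (logB t ht) as hB.
  set (L := ln (1 + t) - ln (1 - t)) in *.
  split.
  - apply Rle_trans with (exp 0); [apply exp_le|rewrite exp_0; lra].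
    assert (2 * t <= L) by exact hA.
    assert (hh: (2*INR m+1)*(2*t) <= (2*INR m+1)*L) by (apply Rmult_le_compat_l; lra).
    nra.
  - apply exp_le.
    assert (ht3 : 1 - t^2 = 4 * INR m * (INR m + 1) * t^2) by (unfold t; field; lra).
    assert (0 < t) by (unfold t; apply Rinv_0_lt_compat; lra).
    assert (hL : (2 * INR m + 1) * L <= 2 + / (6 * INR m * (INR m + 1))).
    { apply Rle_trans with ((2 * INR m + 1) * (2 * t + 2 * t ^ 3 / (3 * (1 - t ^ 2)))).
      apply Rmult_le_compat_l; lra.
      rewrite ht3. right. unfold t. field. lra. }
    lra.
Qed.

Definition I (n : nat) : R := RInt (fun x => sin x ^ n) 0 (PI/2).

Lemma ex_I n : ex_RInt (fun x => sin x ^ n) 0 (PI/2).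
Proof. apply (ex_RInt_continuous (V:=R_CompleteNormedModule)). intros z _. apply (ex_derive_continuous (V:=R_NormedModule)). auto_derive; auto. Qed.

Lemma I_rec n : INR (n+2) * I (n+2) = INR (n+1) * I n.
Proof.
  set (F := fun x => - cos x * sin x ^ (n+1)).
  set (dF := fun x => INR (n+2) * sin x ^ (n+2) - INR (n+1) * sin x ^ n).
  assert (hd : forall x, Rmin 0 (PI/2) <= x <= Rmax 0 (PI/2) -> is_derive F x (dF x)).
  { intros x _. unfold F, dF. auto_derive; [auto|].
      replace (n+2)%nat with (S (S n)) by lia. replace (n+1)%nat with (S n) by lia.
      rewrite !S_INR. simpl. replace (pred (S n)) with n by lia.
      pose proof (sin2_cos2 x). unfold Rsqr in *. 
      assert (Hc : cos x * cos x = 1 - sin x * sin x) by lra.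
      transitivity (sin x * sin x * sin x ^ n - (cos x * cos x) * ((INR n+1) * sin x ^ n)); [ring|].
      rewrite Hc. ring. }
  assert (hc : forall x, Rmin 0 (PI/2) <= x <= Rmax 0 (PI/2) -> continuous dF x).
  { intros x _. apply (ex_derive_continuous (V:=R_NormedModule)). unfold dF. auto_derive; auto. }
  pose proof (@is_RInt_derive R_CompleteNormedModule F dF 0 (PI/2) hd hc) as H.
  assert (e : minus (F (PI/2)) (F 0) = 0).
  { unfold F. rewrite cos_PI2, sin_0, pow_i by lia. unfold minus, plus, opp; simpl. ring. }
  change (is_RInt dF 0 (PI/2) (minus (F (PI/2)) (F 0))) in H. rewrite e in H. unfold dF in H.
  unfold I. 
  assert (H1 := RInt_correct _ _ _ (ex_I (n+2))).
  assert (H2 := RInt_correct _ _ _ (ex_I n)).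
  pose proof (is_RInt_minus _ _ _ _ _ _ (is_RInt_scal _ _ _ (INR (n+2)) _ H1) (is_RInt_scal _ _ _ (INR (n+1)) _ H2)) as H3.
  apply (is_RInt_unique (V:=R_CompleteNormedModule)) in H. apply (is_RInt_unique (V:=R_CompleteNormedModule)) in H3.
  unfold minus, plus, opp, scal in H3; simpl in H3. unfold mult in H3; simpl in H3.
  assert (RInt (fun y : R => INR (n + 2) * sin y ^ (n + 2) + - (INR (n + 1) * sin y ^ n)) 0 (PI / 2) = 
          RInt (fun x : R => INR (n + 2) * sin x ^ (n + 2) - INR (n + 1) * sin x ^ n) 0 (PI / 2)) by reflexivity.
  lra.
Qed.

Lemma I0 : I 0 = PI/2.
Proof. unfold I. simpl pow. rewrite RInt_const. unfold scal; simpl. unfold mult; simpl. ring. Qed.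

Lemma I1 : I 1 = 1.
Proof.
  unfold I.
  assert (hd : forall x, Rmin 0 (PI/2) <= x <= Rmax 0 (PI/2) -> is_derive (fun x => - cos x) x (sin x ^ 1)).
  { intros x _. auto_derive; auto. ring. }
  assert (hc : forall x, Rmin 0 (PI/2) <= x <= Rmax 0 (PI/2) -> continuous (fun x => sin x ^ 1) x).
  { intros x _. apply (ex_derive_continuous (V:=R_NormedModule)). auto_derive; auto. }
  pose proof (@is_RInt_derive R_CompleteNormedModule _ _ 0 (PI/2) hd hc) as H.
  apply (is_RInt_unique (V:=R_CompleteNormedModule)) in H. rewrite H.
  rewrite cos_PI2, cos_0. unfold minus, plus, opp; simpl. ring.
Qed.

Lemma I_decr n : I (S n) <= I n.
Proof.
  unfold I. apply RInt_le; try apply ex_I.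
  - pose proof PI_RGT_0; lra.
  - intros x hx. pose proof PI_RGT_0.
    assert (0 <= sin x) by (apply sin_ge_0; lra).
    pose proof (SIN_bound x). simpl.
    rewrite <- (Rmult_1_l (sin x ^ n)) at 2. apply Rmult_le_compat_r; [apply pow_le|]; lra.
Qed.

Lemma I_closed m :
  I (2*m) = PI/2 * INR (fact (2*m)) / (4^m * INR (fact m)^2) /\
  I (2*m+1) = 4^m * INR (fact m)^2 / INR (fact (2*m+1)).
Proof.
  assert (hf : forall k, 0 < INR (fact k)) by (intro k; apply lt_0_INR, lt_O_fact).
  induction m as [|m [IH1 IH2]].
  - simpl. rewrite I0. replace (0+0+1)%nat with 1%nat by lia. rewrite I1. simpl. split; field.
  - pose proof (I_rec (2*m)) as R1. pose proof (I_rec (2*m+1)) as R2.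
    replace (2*m+2)%nat with (2 * S m)%nat in R1 by lia.
    replace (2*m+1+2)%nat with (2 * S m + 1)%nat in R2 by lia.
    replace (2*m+1+1)%nat with (2 * S m)%nat in R2 by lia.
    assert (hA : INR (2 * S m) <> 0) by (apply not_0_INR; lia).
    assert (hB : INR (2 * S m + 1) <> 0) by (apply not_0_INR; lia).
    split.
    + apply (Rmult_eq_reg_l (INR (2 * S m))); [|exact hA]. rewrite R1, IH1.
      replace (2 * S m)%nat with (S (S (2*m))) by lia.
      rewrite !fact_simpl, !mult_INR. rewrite !S_INR, plus_INR, mult_INR. simpl pow.
      rewrite !S_INR. simpl INR. field. pose proof (hf m); pose proof (pos_INR m). repeat split; try apply pow_nonzero; lra.
    + apply (Rmult_eq_reg_l (INR (2 * S m + 1))); [|exact hB]. rewrite R2.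
      rewrite IH2.
      assert (E1 : INR (fact (2 * S m + 1)) = (2*INR m+3)*(2*INR m+2)*INR (fact (2*m+1))).
      { replace (2 * S m + 1)%nat with (S (S (2*m+1))) by lia. rewrite !fact_simpl, !mult_INR. inrs; ring. }
      assert (E2 : INR (fact (S m)) = (INR m + 1) * INR (fact m)).
      { rewrite fact_simpl, mult_INR, S_INR. ring. }
      assert (E3 : INR (2 * S m) = 2 * INR m + 2).
      { inrs; ring. }
      assert (E4 : INR (2 * S m + 1) = 2 * INR m + 3).
      { inrs; ring. }
      rewrite E1, E2, E3, E4.
      pose proof (hf (2*m+1)%nat); pose proof (hf m); pose proof (pos_INR m).
      simpl pow. field. repeat split; try apply pow_nonzero; lra.
Qed.
Lemma tau_rel m : (1 <= m)%nat ->
  tau m ^ 2 * INR m * INR (fact (2*m)) ^ 2 = 2 * 16 ^ m * INR (fact m) ^ 4 * tau (2*m).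
Proof.
  intros hm. assert (hx : 0 < INR m) by (apply lt_0_INR; lia).
  unfold tau.
  replace (INR (2*m)) with (2 * INR m) by (inrs; ring).
  replace (2 * (2 * INR m)) with (2 * INR m + 2 * INR m) by ring. rewrite exp_plus.
  replace (2 * (2*m) + 1)%nat with (4*m+1)%nat by lia.
  rewrite Rpow_mult_distr.
  replace (16 ^ m) with (2 ^ (4*m)) by (rewrite pow_mult; f_equal; ring).
  replace (4*m+1)%nat with (S (4*m)) by lia. 
  replace (INR m ^ (2*m+1)) with (INR m ^ (S (2*m))) by (f_equal; lia).
  assert (H : INR m ^ (4*m) = (INR m ^ (2*m)) ^ 2) by (rewrite <- pow_mult; f_equal; lia).
  rewrite <- !tech_pow_Rmult. rewrite H.
  assert (0 < INR m ^ (2*m)) by (apply pow_lt; lra).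
  assert (0 < 2 ^ (4*m)) by (apply pow_lt; lra).
  set (y := INR m ^ (2*m)) in *. set (z := 2 ^ (4*m)) in *.
  field. lra.
Qed.

Lemma factR_pos k : 0 < INR (fact k).
Proof. apply lt_0_INR, lt_O_fact. Qed.

Lemma tau_pos m : (1 <= m)%nat -> 0 < tau m.
Proof.
  intros hm. unfold tau. assert (0 < INR m) by (apply lt_0_INR; lia).
  pose proof (factR_pos m). apply Rdiv_lt_0_compat. apply Rmult_lt_0_compat. apply pow_lt; lra. apply exp_pos. apply pow_lt; lra.
Qed.

Lemma WU m : (1 <= m)%nat -> tau m ^ 2 * INR m <= PI * (2 * INR m + 1) * tau (2*m).
Proof.
  intros hm. pose proof (I_decr (2*m)) as D. destruct (I_closed m) as [E1 E2].
  replace (S (2*m)) with (2*m+1)%nat in D by lia. rewrite E1, E2 in D.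
  assert (hF : INR (fact (2*m+1)) = (2 * INR m + 1) * INR (fact (2*m))).
  { replace (2*m+1)%nat with (S (2*m)) by lia. rewrite fact_simpl, mult_INR. inrs. ring. }
  rewrite hF in D.
  assert (h2 := tau_rel m hm).
  pose proof (factR_pos m). pose proof (factR_pos (2*m)). assert (0 < INR m) by (apply lt_0_INR; lia).
  pose proof (tau_pos (2*m) ltac:(lia)).
  assert (h4 : 0 < 4 ^ m) by (apply pow_lt; lra).
  assert (e16 : 16 ^ m = 4 ^ m * 4 ^ m) by (rewrite <- Rpow_mult_distr; f_equal; ring).
  set (F1 := INR (fact m)) in *. set (F2 := INR (fact (2*m))) in *. set (q := 4 ^ m) in *.
  assert (K : q * F1^2 * (q * F1^2) <= PI / 2 * F2 * ((2 * INR m + 1) * F2)).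
  { apply Rmult_le_reg_r with (/ ((2 * INR m + 1) * F2) * / (q * F1^2)).
    assert (0 < (2 * INR m + 1) * F2) by (apply Rmult_lt_0_compat; lra).
    assert (0 < q * F1 ^ 2) by (apply Rmult_lt_0_compat; [lra| apply pow_lt; lra]).
    apply Rmult_lt_0_compat; apply Rinv_0_lt_compat; lra.
    replace (q * F1 ^ 2 * (q * F1 ^ 2) * (/ ((2 * INR m + 1) * F2) * / (q * F1 ^ 2))) with (q * F1 ^ 2 / ((2 * INR m + 1) * F2)) by (field; repeat split; try apply pow_nonzero; lra).
    replace (PI / 2 * F2 * ((2 * INR m + 1) * F2) * (/ ((2 * INR m + 1) * F2) * / (q * F1 ^ 2))) with (PI / 2 * F2 / (q * F1 ^ 2)) by (field; repeat split; try apply pow_nonzero; lra).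
    exact D. }
  apply Rmult_le_reg_r with (F2 ^ 2). nra.
  rewrite h2. rewrite e16.
  assert (K2 := Rmult_le_compat_r (2 * tau (2*m)) _ _ ltac:(lra) K).
  nra.
Qed.

Lemma WL j : 2 * PI * tau (2 * S j) <= tau (S j) ^ 2.
Proof.
  pose proof (I_decr (2*j+1)) as D. destruct (I_closed (S j)) as [E1 _]. destruct (I_closed j) as [_ E2].
  replace (S (2*j+1)) with (2 * S j)%nat in D by lia. rewrite E1, E2 in D.
  assert (hF1 : INR (fact (S j)) = (INR j + 1) * INR (fact j)) by (rewrite fact_simpl, mult_INR; inrs; ring).
  assert (hF2 : INR (fact (2 * S j)) = (2 * INR j + 2) * INR (fact (2*j+1))).
  { replace (2 * S j)%nat with (S (2*j+1)) by lia. rewrite fact_simpl, mult_INR. inrs. ring. }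
  assert (h2 := tau_rel (S j) ltac:(lia)).
  assert (e4 : 4 ^ S j = 4 * 4 ^ j) by reflexivity.
  assert (e16 : 16 ^ S j = 16 * (4 ^ j * 4 ^ j)) by (simpl; rewrite <- Rpow_mult_distr; do 2 f_equal; ring).
  rewrite hF1, hF2, e4 in D. rewrite hF1, hF2, e16 in h2.
  pose proof (factR_pos j). pose proof (factR_pos (2*j+1)). pose proof (pos_INR j).
  pose proof (tau_pos (2 * S j) ltac:(lia)).
  assert (h4 : 0 < 4 ^ j) by (apply pow_lt; lra).
  rewrite S_INR in h2.
  set (A := INR (fact j)) in *. set (B := INR (fact (2*j+1))) in *. set (q := 4 ^ j) in *. set (x := INR j) in *.
  assert (K : PI * B ^ 2 <= 4 * (x + 1) * (q * q) * A ^ 4).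
  { assert (0 < B) by lra. assert (0 < 4 * q * ((x + 1) * A) ^ 2) by (apply Rmult_lt_0_compat; [lra| apply pow_lt; nra]).
    apply Rmult_le_compat_r with (r := B * (4 * q * ((x + 1) * A) ^ 2)) in D; [|nra].
    replace (PI / 2 * ((2 * x + 2) * B) / (4 * q * ((x + 1) * A) ^ 2) * (B * (4 * q * ((x + 1) * A) ^ 2))) with (PI * B^2 * (x+1)) in D by (field; lra).
    replace (q * A ^ 2 / B * (B * (4 * q * ((x + 1) * A) ^ 2))) with (4 * (x + 1) * (q * q) * A ^ 4 * (x+1)) in D by (field; lra).
    apply Rmult_le_reg_r with (x+1); lra. }
  apply Rmult_le_reg_r with ((x+1) * ((2 * x + 2) * B) ^ 2). apply Rmult_lt_0_compat; [lra| apply pow_lt; nra].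
  replace (tau (S j) ^ 2 * ((x + 1) * ((2 * x + 2) * B) ^ 2)) with (tau (S j) ^ 2 * (x + 1) * ((2 * x + 2) * B) ^ 2) by ring.
  rewrite h2.
  assert (K2 := Rmult_le_compat_r (8 * (x+1)^3 * tau (2 * S j)) _ _ ltac:(apply Rmult_le_pos; [apply Rmult_le_pos; [lra | apply pow_le; lra] | lra]) K).
  nra.
Qed.

Lemma tau_decr m d : (1 <= m)%nat -> tau (m + d) <= tau m.
Proof.
  intros hm. induction d as [|d IH].
  - rewrite Nat.add_0_r; lra.
  - replace (m + S d)%nat with (S (m + d)) by lia.
    rewrite tau_step by lia. destruct (step_bounds (m+d) ltac:(lia)) as [h1 _].
    pose proof (tau_pos (m+d) ltac:(lia)).
    assert (0 <= exp 2 * (INR (m + d) / INR (S (m + d))) ^ (2 * (m + d) + 1)).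
    { apply Rmult_le_pos. left; apply exp_pos. apply pow_le. apply Rmult_le_pos. apply pos_INR. left; apply Rinv_0_lt_compat, lt_0_INR; lia. }
    nra.
Qed.

Lemma tau_incr m d : (1 <= m)%nat ->
  tau m * exp (- / (6 * INR m)) <= tau (m + d) * exp (- / (6 * INR (m + d))).
Proof.
  intros hm. induction d as [|d IH].
  - rewrite Nat.add_0_r; lra.
  - replace (m + S d)%nat with (S (m + d)) by lia.
    rewrite tau_step by lia. destruct (step_bounds (m+d) ltac:(lia)) as [_ h2].
    pose proof (tau_pos (m+d) ltac:(lia)).
    set (k := (m + d)%nat) in *.
    assert (hk : 1 <= INR k) by (apply (le_INR 1); lia).
    eapply Rle_trans; [exact IH|].
    rewrite Rmult_assoc. apply Rmult_le_compat_l; [lra|].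
    eapply Rle_trans; [|apply Rmult_le_compat_r; [left; apply exp_pos| exact h2]].
    rewrite <- exp_plus. apply exp_le. rewrite S_INR.
    right. field. lra.
Qed.

Lemma exp_neg_ge x : 1 - x <= exp (- x).
Proof. pose proof (exp_ineq1_le (- x)). lra. Qed.

Lemma stirling_lower j : (1 <= j)%nat -> 2 * PI <= tau j.
Proof.
  intros hj.
  assert (H : forall m, (j <= m)%nat -> 2 * PI * (1 - / (12 * INR m)) <= tau j).
  { intros m hm. destruct m as [|i]; [lia|].
    pose proof (WL i) as W.
    pose proof (tau_incr (S i) (S i) ltac:(lia)) as T.
    replace (S i + S i)%nat with (2 * S i)%nat in T by lia.
    pose proof (tau_pos (S i) ltac:(lia)). pose proof (tau_pos (2 * S i) ltac:(lia)).
    assert (hx : 1 <= INR (S i)) by (apply (le_INR 1); lia).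
    replace (INR (2 * S i)) with (2 * INR (S i)) in T by (rewrite mult_INR; reflexivity).
    set (x := INR (S i)) in *.
    assert (e : exp (- / (6 * x)) = exp (- / (6 * (2 * x))) * exp (- / (12 * x))) by (rewrite <- exp_plus; f_equal; field; lra).
    rewrite e in T.
    assert (T2 : tau (S i) * exp (- / (12 * x)) <= tau (2 * S i)).
    { apply Rmult_le_reg_r with (exp (- / (6 * (2 * x)))). apply exp_pos. nra. }
    assert (T3 : 2 * PI * exp (- / (12 * x)) <= tau (S i)).
    { apply Rmult_le_reg_r with (tau (S i)); [lra|]. pose proof PI_RGT_0. nra. }
    pose proof (exp_neg_ge (/ (12 * x))). pose proof PI_RGT_0.
    pose proof (tau_decr j (S i - j) hj) as D. replace (j + (S i - j))%nat with (S i) in D by lia.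
    nra. }
  destruct (Rle_or_lt (2 * PI) (tau j)) as [h|h]; [exact h|].
  exfalso.
  destruct (archimed_cor1 ((2 * PI - tau j) / (2 * PI) * 12)) as [N [hN hN0]].
  { pose proof PI_RGT_0. apply Rmult_lt_0_compat; [|lra]. apply Rdiv_lt_0_compat; lra. }
  specialize (H (N + j)%nat ltac:(lia)).
  assert (hNj : INR N <= INR (N + j)) by (apply le_INR; lia).
  assert (hN1 : 0 < INR N) by (apply lt_0_INR; lia).
  assert (/ INR (N + j) <= / INR N) by (apply Rinv_le_contravar; lra).
  pose proof PI_RGT_0.
  assert (e : / (12 * INR (N + j)) = / INR (N + j) / 12) by (field; lra).
  rewrite e in H.
  assert (2 * PI * (/ INR (N + j) / 12) < 2 * PI - tau j).
  { apply Rle_lt_trans with (2 * PI * (/ INR N / 12)). apply Rmult_le_compat_l; lra.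
    replace (2 * PI - tau j) with (2 * PI * (((2 * PI - tau j) / (2 * PI) * 12) / 12)) by (field; lra).
    apply Rmult_lt_compat_l; lra. }
  nra.
Qed.

Lemma stirling_upper j : (1 <= j)%nat -> tau j * exp (- / (6 * INR j)) <= 2 * PI.
Proof.
  intros hj.
  assert (H : forall m, (j <= m)%nat -> tau j * exp (- / (6 * INR j)) <= 2 * PI + PI / INR m).
  { intros m hm.
    pose proof (tau_incr j (m - j) hj) as T. replace (j + (m - j))%nat with m in T by lia.
    pose proof (WU m ltac:(lia)) as W.
    pose proof (tau_decr m m ltac:(lia)) as D. replace (m + m)%nat with (2 * m)%nat in D by lia.
    pose proof (tau_pos m ltac:(lia)).
    assert (hx : 1 <= INR m) by (apply (le_INR 1); lia).
    assert (e1 : exp (- / (6 * INR m)) <= 1).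
    { rewrite <- exp_0. apply exp_le. assert (0 < / (6 * INR m)) by (apply Rinv_0_lt_compat; lra). lra. }
    assert (T2 : tau m <= 2 * PI + PI / INR m).
    { pose proof PI_RGT_0.
      assert (tau m ^ 2 * INR m <= PI * (2 * INR m + 1) * tau m).
      { eapply Rle_trans; [exact W|]. apply Rmult_le_compat_l; [|exact D]. apply Rmult_le_pos; lra. }
      replace (2 * PI + PI / INR m) with (PI * (2 * INR m + 1) / INR m) by (field; lra).
      apply Rmult_le_reg_r with (tau m * INR m). nra.
      replace (PI * (2 * INR m + 1) / INR m * (tau m * INR m)) with (PI * (2 * INR m + 1) * tau m) by (field; lra).
      nra. }
    pose proof (exp_pos (- / (6 * INR m))). nra. }
  destruct (Rle_or_lt (tau j * exp (- / (6 * INR j))) (2 * PI)) as [h|h]; [exact h|].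
  exfalso. pose proof PI_RGT_0.
  set (T := tau j * exp (- / (6 * INR j))) in *.
  destruct (archimed_cor1 ((T - 2 * PI) / PI)) as [N [hN hN0]].
  { apply Rdiv_lt_0_compat; lra. }
  specialize (H (N + j)%nat ltac:(lia)).
  assert (hNj : INR N <= INR (N + j)) by (apply le_INR; lia).
  assert (hN1 : 0 < INR N) by (apply lt_0_INR; lia).
  assert (/ INR (N + j) <= / INR N) by (apply Rinv_le_contravar; lra).
  assert (PI / INR (N + j) < T - 2 * PI).
  { unfold Rdiv. apply Rle_lt_trans with (PI * / INR N). apply Rmult_le_compat_l; lra.
    replace (T - 2 * PI) with (PI * ((T - 2 * PI) / PI)) by (field; lra).
    apply Rmult_lt_compat_l; lra. }
  lra.
Qed.

Lemma ln_le_sub1 y : 0 < y -> ln y <= y - 1.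
Proof. intros hy. pose proof (exp_ineq1_le (ln y)). rewrite exp_ln in H by lra. lra. Qed.

Lemma pow_exp_ln y k : 0 < y -> y ^ k = exp (INR k * ln y).
Proof. intros hy. rewrite <- ln_pow by lra. rewrite exp_ln; [reflexivity|]. apply pow_lt; lra. Qed.

Lemma gibbs a k r : 0 < a -> (1 <= k)%nat -> (1 <= r)%nat ->
  INR (k + r) ^ (k + r) * a ^ k <= INR k ^ k * INR r ^ r * (1 + a) ^ (k + r).
Proof.
  intros ha hk hr.
  assert (hK : 0 < INR k) by (apply lt_0_INR; lia).
  assert (hR : 0 < INR r) by (apply lt_0_INR; lia).
  rewrite plus_INR.
  set (n := INR k + INR r).
  set (y1 := n * a / (INR k * (1 + a))). set (y2 := n / (INR r * (1 + a))).
  assert (h1 : 0 < y1) by (unfold y1, n; apply Rdiv_lt_0_compat; nra).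
  assert (h2 : 0 < y2) by (unfold y2, n; apply Rdiv_lt_0_compat; nra).
  assert (P : y1 ^ k * y2 ^ r <= 1).
  { rewrite (pow_exp_ln y1), (pow_exp_ln y2) by lra. rewrite <- exp_plus.
    rewrite <- exp_0. apply exp_le.
    pose proof (ln_le_sub1 y1 h1). pose proof (ln_le_sub1 y2 h2).
    assert (INR k * (y1 - 1) + INR r * (y2 - 1) = 0) by (unfold y1, y2, n; field; lra).
    assert (INR k * ln y1 <= INR k * (y1 - 1)) by (apply Rmult_le_compat_l; lra).
    assert (INR r * ln y2 <= INR r * (y2 - 1)) by (apply Rmult_le_compat_l; lra).
    lra. }
  assert (E : y1 ^ k * y2 ^ r = (n ^ (k + r) * a ^ k) / (INR k ^ k * INR r ^ r * (1 + a) ^ (k + r))).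
  { unfold y1, y2. unfold Rdiv. rewrite !Rpow_mult_distr, !pow_inv, !Rpow_mult_distr, !pow_add.
    field. repeat split; try apply pow_nonzero; lra. }
  rewrite E in P.
  assert (0 < INR k ^ k * INR r ^ r * (1 + a) ^ (k + r)).
  { apply Rmult_lt_0_compat; [apply Rmult_lt_0_compat|]; apply pow_lt; lra. }
  apply Rmult_le_reg_r with (/ (INR k ^ k * INR r ^ r * (1 + a) ^ (k + r))).
  apply Rinv_0_lt_compat; lra.
  rewrite Rinv_r by lra. exact P.
Qed.
Lemma poly a l n K : 0 < a -> 0 < l < 1 -> 1 <= n -> 1 <= n * l * a -> a <= n * l ->
  K * (a + 1) <= a * (n + 1) -> a * (n + 1) < (K + 1) * (a + 1) ->
  (1 + / (3 * n)) * (n ^ 2 * a * (1 - l) ^ 2) <= K * (n - K) * (a + 1) ^ 2.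
Proof.
  intros ha hl hn hX hY hK1 hK2.
  set (u := K * (1 + a) - a * n).
  assert (hu1 : -1 < u) by (unfold u; nra).
  assert (hu2 : u <= a) by (unfold u; nra).
  assert (E : K * (n - K) * (a + 1) ^ 2 = a * n^2 + n * u * (1 - a) - u^2) by (unfold u; ring).
  rewrite E.
  assert (ET : (1 + / (3 * n)) * (n ^ 2 * a * (1 - l) ^ 2) = a * n^2 * (1-l)^2 + a * n * (1-l)^2 / 3) by (field; lra).
  rewrite ET.
  set (s := 1 - l).
  assert (hs : 0 < s < 1) by (unfold s; lra).
  assert (hq : 3 - s^2 >= 3 * (1 - s)) by nra.
  destruct (Rle_or_lt a 1) as [ha1|ha1].
  -
    assert (A1 : a * n^2 * (2*l - l^2) >= n * (2 - l)).
    { replace (a * n^2 * (2*l - l^2)) with (n * (n * l * a) * (2 - l)) by ring.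
      assert (0 <= n * (2 - l)) by nra. nra. }
    assert (A2 : n * a * (3 - s^2) / 3 >= 1).
    { assert (n * a * l >= 1) by nra.
      assert (n * a * (3 - s^2) >= 3 * (n * a * (1 - s))) by (assert (0 <= n * a) by nra; nra).
      unfold s in *. nra. }
    assert (F1 : a * n^2 - n * (1 - a) - 1 >= a * n^2 * s^2 + a * n * s^2 / 3).
    { unfold s in *. nra. }
    assert (F2 : a * n^2 + n * u * (1 - a) - u^2 >= a * n^2 - n * (1 - a) - 1).
    { assert (0 <= (u + 1) * (a - u)) by nra.
      assert ((u + 1) * n * (1 - a) >= 0) by (apply Rle_ge; apply Rmult_le_pos; [nra|lra]).
      nra. }
    unfold s in *. lra.
  - assert (A1 : a * n^2 * (2*l - l^2) >= n * a * a * (2 - l)).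
    { replace (a * n^2 * (2*l - l^2)) with (n * a * (n * l) * (2 - l)) by ring.
      assert (0 <= n * a * (2 - l)) by nra. nra. }
    assert (A2 : n * (3 - s^2) / 3 >= a).
    { assert (n * (1 - s) >= a) by (unfold s; lra).
      assert (n * (3 - s^2) >= 3 * (n * (1 - s))) by nra.
      lra. }
    assert (F1 : a * n^2 + n * a * (1 - a) - a^2 >= a * n^2 * s^2 + a * n * s^2 / 3).
    { assert (n * a * (3 - s^2) / 3 >= a * a) by (apply Rle_ge; replace (n * a * (3 - s^2) / 3) with (a * (n * (3 - s^2) / 3)) by field; apply Rmult_le_compat_l; lra).
      assert (0 <= n * a * a * (1 - l)) by (apply Rmult_le_pos; nra).
      unfold s in *. lra. }
    assert (F2 : a * n^2 + n * u * (1 - a) - u^2 >= a * n^2 + n * a * (1 - a) - a^2).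
    { assert (0 <= (u + 1) * (a - u)) by nra.
      assert ((a - u) * n * (a - 1) >= 0) by (apply Rle_ge; apply Rmult_le_pos; [nra|lra]).
      nra. }
    unfold s in *. lra.
Qed.

Lemma fact_sq m : (1 <= m)%nat ->
  INR (fact m) ^ 2 = tau m * ((INR m ^ m) ^ 2 * INR m) * exp (- (2 * INR m)).
Proof.
  intros hm. assert (0 < INR m) by (apply lt_0_INR; lia).
  unfold tau. rewrite exp_Ropp.
  replace ((INR m ^ m) ^ 2 * INR m) with (INR m ^ (2 * m + 1)).
  2:{ rewrite <- pow_mult, pow_add. f_equal; [f_equal; lia| ring]. }
  field. split; [apply Rgt_not_eq, exp_pos| apply pow_nonzero; lra].
Qed.

Lemma E_bound n : 1 <= n -> exp (/ (6 * n)) <= 1 + / (3 * n).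
Proof.
  intros hn. set (x := / (6 * n)).
  assert (hx : 0 < x <= 1/6). { unfold x. split. apply Rinv_0_lt_compat; lra.
    apply Rmult_le_reg_l with (6 * n); [lra|]. rewrite Rinv_r by lra. lra. }
  assert (e : / (3 * n) = 2 * x) by (unfold x; field; lra). rewrite e.
  pose proof (exp_neg_ge x).
  assert (exp x * exp (- x) = 1) by (rewrite <- exp_plus; replace (x + - x) with 0 by ring; apply exp_0).
  pose proof (exp_pos x). nra.
Qed.

Lemma key (Fn Fk Fr P Q U A B Xk Xr E nR K rR a l : R) :
  0 < Fk -> 0 < Fr -> 0 <= A -> 0 < P -> 0 < Xk -> 0 < Xr -> 0 < nR -> 0 < a -> 0 <= E -> 0 < K -> 0 < rR ->
  Fn ^ 2 <= 2 * PI * E * (P ^ 2 * nR) * (Xk * Xr) ->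
  2 * PI * (Q ^ 2 * K) * Xk <= Fk ^ 2 ->
  2 * PI * (U ^ 2 * rR) * Xr <= Fr ^ 2 ->
  P * A <= Q * U * B ->
  E * (nR ^ 2 * a * (1 - l) ^ 2) <= K * rR * (a + 1) ^ 2 ->
  (Fn / (Fk * Fr) * A) ^ 2 * (2 * PI * nR * a) * (1 - l) ^ 2 <= ((a + 1) * B) ^ 2.
Proof.
  intros hFk hFr hA hP hXk hXr hn ha hE hK hr s1 s4k s4r s2 s3.
  pose proof PI_RGT_0.
  assert (G : Fn ^ 2 * A ^ 2 * (2 * PI * nR * a) * (1 - l) ^ 2 <= ((a + 1) * B) ^ 2 * (Fk ^ 2 * Fr ^ 2)).
  { apply Rle_trans with ((2 * PI * E * (P ^ 2 * nR) * (Xk * Xr)) * A ^ 2 * (2 * PI * nR * a) * (1 - l) ^ 2).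
    { apply Rmult_le_compat_r; [apply pow2_ge_0|].
      apply Rmult_le_compat_r; [left; apply Rmult_lt_0_compat; [apply Rmult_lt_0_compat|]; lra|]. apply Rmult_le_compat_r; [apply pow_le; lra| exact s1]. }
    replace ((2 * PI * E * (P ^ 2 * nR) * (Xk * Xr)) * A ^ 2 * (2 * PI * nR * a) * (1 - l) ^ 2)
      with ((4 * PI ^ 2 * Xk * Xr) * (P * A) ^ 2 * (E * (nR ^ 2 * a * (1 - l) ^ 2))) by ring.
    assert (hc : 0 <= 4 * PI ^ 2 * Xk * Xr) by (apply Rmult_le_pos; [apply Rmult_le_pos|]; nra).
    assert (hPA : 0 <= P * A) by nra.
    assert (s2' : (P * A) ^ 2 <= (Q * U * B) ^ 2) by (apply pow_incr; lra).
    assert (hE2 : 0 <= E * (nR ^ 2 * a * (1 - l) ^ 2)) by (apply Rmult_le_pos; [lra| apply Rmult_le_pos; [nra| apply pow2_ge_0]]).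
    apply Rle_trans with ((4 * PI ^ 2 * Xk * Xr) * (Q * U * B) ^ 2 * (E * (nR ^ 2 * a * (1 - l) ^ 2))).
    { apply Rmult_le_compat_r; [exact hE2|]. apply Rmult_le_compat_l; [exact hc| exact s2']. }
    apply Rle_trans with ((4 * PI ^ 2 * Xk * Xr) * (Q * U * B) ^ 2 * (K * rR * (a + 1) ^ 2)).
    { apply Rmult_le_compat_l; [apply Rmult_le_pos; [exact hc| apply pow_le]|exact s3]. nra. }
    replace ((4 * PI ^ 2 * Xk * Xr) * (Q * U * B) ^ 2 * (K * rR * (a + 1) ^ 2))
      with (((a + 1) * B) ^ 2 * ((2 * PI * (Q ^ 2 * K) * Xk) * (2 * PI * (U ^ 2 * rR) * Xr))) by ring.
    apply Rmult_le_compat_l; [nra|].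
    assert (0 <= 2 * PI * (Q ^ 2 * K) * Xk) by (pose proof (pow2_ge_0 Q); apply Rmult_le_pos; [apply Rmult_le_pos; [lra| apply Rmult_le_pos; lra]| lra]).
    assert (0 <= 2 * PI * (U ^ 2 * rR) * Xr) by (pose proof (pow2_ge_0 U); apply Rmult_le_pos; [apply Rmult_le_pos; [lra| apply Rmult_le_pos; lra]| lra]).
    apply Rmult_le_compat; assumption. }
  assert (hF : 0 < Fk ^ 2 * Fr ^ 2) by (apply Rmult_lt_0_compat; apply pow_lt; lra).
  apply Rmult_le_reg_r with (Fk ^ 2 * Fr ^ 2); [exact hF|].
  replace ((Fn / (Fk * Fr) * A) ^ 2 * (2 * PI * nR * a) * (1 - l) ^ 2 * (Fk ^ 2 * Fr ^ 2))
    with (Fn ^ 2 * A ^ 2 * (2 * PI * nR * a) * (1 - l) ^ 2) by (field; lra).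
  exact G.
Qed.

Theorem proposition11 (a l : R) (ha : 0 < a) (hl0 : 0 < l) (hl1 : l < 1)
  (n : nat) (hn : (Nthreshold a l <= Z.of_nat n)%Z) :
  Binomial.C n (kidx a n) * a ^ (kidx a n)
  <= Mconst a l / sqrt (2 * PI) * / sqrt (INR n) * (1 + a) ^ n.
Proof.
  unfold Nthreshold, floorZ in hn. apply Z.max_lub_iff in hn. destruct hn as [h1 h2].
  apply IZR_le in h1. apply IZR_le in h2. rewrite plus_IZR, <- INR_IZR_INZ in h1, h2.
  destruct (base_Int_part (a / l)) as [_ b1]. destruct (base_Int_part (1 / (l * a))) as [_ b2].
  assert (hY : a < INR n * l).
  { assert (a / l < INR n) by lra. apply Rmult_lt_compat_r with (r := l) in H; [|lra].
    replace (a / l * l) with a in H by (field; lra). exact H. }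
  assert (hX : 1 < INR n * l * a).
  { assert (1 / (l * a) < INR n) by lra. apply Rmult_lt_compat_r with (r := l * a) in H; [|nra].
    replace (1 / (l * a) * (l * a)) with 1 in H by (field; lra). lra. }
  assert (hnl : 1 < INR n * l).
  { destruct (Rle_or_lt (INR n * l) 1) as [h|h]; [|exact h]. exfalso.
    assert (INR n * l * a <= 1 * a) by (apply Rmult_le_compat_r; lra). lra. }
  assert (hn1 : 1 <= INR n) by nra.
  assert (hnn : (1 <= n)%nat) by (apply INR_le; simpl; lra).
  unfold kidx, floorZ.
  set (x := a * (INR n + 1) / (a + 1)).
  destruct (base_Int_part x) as [bx1 bx2].
  assert (hz : (0 <= Int_part x)%Z).
  { assert (0 <= x) by (unfold x; apply Rmult_le_pos; [nra| left; apply Rinv_0_lt_compat; lra]).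
    assert (IZR (-1) < IZR (Int_part x)) by lra. apply lt_IZR in H0. lia. }
  set (k := Z.to_nat (Int_part x)).
  assert (hK : INR k = IZR (Int_part x)) by (unfold k; rewrite INR_IZR_INZ, Z2Nat.id by exact hz; reflexivity).
  assert (hK1 : INR k * (a + 1) <= a * (INR n + 1)).
  { rewrite hK. apply Rmult_le_reg_r with (/ (a + 1)). apply Rinv_0_lt_compat; lra.
    replace (IZR (Int_part x) * (a + 1) * / (a + 1)) with (IZR (Int_part x)) by (field; lra). unfold x in bx1. exact bx1. }
  assert (hK2 : a * (INR n + 1) < (INR k + 1) * (a + 1)).
  { assert (x < INR k + 1) by lra. unfold x in H.
    apply Rmult_lt_compat_r with (r := a + 1) in H; [|lra].
    replace (a * (INR n + 1) / (a + 1) * (a + 1)) with (a * (INR n + 1)) in H by (field; lra). exact H. }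
  assert (hk1 : (1 <= k)%nat).
  { assert (INR 0 < INR k) by (simpl; nra). apply INR_lt in H. lia. }
  assert (hkn : (k < n)%nat).
  { assert (INR k < INR n) by nra. apply INR_lt in H. exact H. }
  set (r := (n - k)%nat).
  assert (hr1 : (1 <= r)%nat) by (unfold r; lia).
  assert (hrR : INR r = INR n - INR k) by (unfold r; apply minus_INR; lia).
  assert (hnkr : n = (k + r)%nat) by (unfold r; lia).
  unfold Binomial.C. fold r.
  pose proof (stirling_upper n hnn) as SU.
  pose proof (stirling_lower k hk1) as SK.
  pose proof (stirling_lower r hr1) as SR.
  pose proof (fact_sq n hnn) as Fn. pose proof (fact_sq k hk1) as Fk. pose proof (fact_sq r hr1) as Fr.
  pose proof (gibbs a k r ha hk1 hr1) as Gb. rewrite <- hnkr in Gb.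
  assert (hP : 0 < INR n ^ n) by (apply pow_lt; lra).
  assert (hkpos : 0 < INR k) by (apply lt_0_INR; lia).
  assert (hrpos : 0 < INR r) by (apply lt_0_INR; lia).
  set (E := exp (/ (6 * INR n))).
  assert (hE : 0 <= E) by (left; apply exp_pos).
  assert (tn : tau n <= 2 * PI * E).
  { assert (exp (- / (6 * INR n)) * E = 1) by (unfold E; rewrite <- exp_plus; replace (- / (6 * INR n) + / (6 * INR n)) with 0 by ring; apply exp_0).
    pose proof (exp_pos (- / (6 * INR n))). pose proof (tau_pos n hnn). nra. }
  assert (eX : exp (- (2 * INR n)) = exp (- (2 * INR k)) * exp (- (2 * INR r))).
  { rewrite <- exp_plus. f_equal. rewrite hrR. ring. }
  assert (K := key (INR (fact n)) (INR (fact k)) (INR (fact r)) (INR n ^ n) (INR k ^ k) (INR r ^ r) (a ^ k) ((1 + a) ^ n)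
     (exp (- (2 * INR k))) (exp (- (2 * INR r))) E (INR n) (INR k) (INR r) a l
     (factR_pos k) (factR_pos r) ltac:(left; apply pow_lt; lra) hP (exp_pos _) (exp_pos _) ltac:(lra) ha hE hkpos hrpos).
  assert (s1 : INR (fact n) ^ 2 <= 2 * PI * E * ((INR n ^ n) ^ 2 * INR n) * (exp (- (2 * INR k)) * exp (- (2 * INR r)))).
  { rewrite Fn, eX. apply Rmult_le_compat_r; [left; apply Rmult_lt_0_compat; apply exp_pos|].
    apply Rmult_le_compat_r; [left; apply Rmult_lt_0_compat; [apply pow_lt|]; lra| exact tn]. }
  assert (s4k : 2 * PI * ((INR k ^ k) ^ 2 * INR k) * exp (- (2 * INR k)) <= INR (fact k) ^ 2).
  { rewrite Fk. apply Rmult_le_compat_r; [left; apply exp_pos|].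
    apply Rmult_le_compat_r; [apply Rmult_le_pos; [apply pow2_ge_0|lra]| exact SK]. }
  assert (s4r : 2 * PI * ((INR r ^ r) ^ 2 * INR r) * exp (- (2 * INR r)) <= INR (fact r) ^ 2).
  { rewrite Fr. apply Rmult_le_compat_r; [left; apply exp_pos|].
    apply Rmult_le_compat_r; [apply Rmult_le_pos; [apply pow2_ge_0|lra]| exact SR]. }
  assert (s3 : E * (INR n ^ 2 * a * (1 - l) ^ 2) <= INR k * INR r * (a + 1) ^ 2).
  { rewrite hrR. eapply Rle_trans; [|apply (poly a l (INR n) (INR k)); [lra|split;lra|lra|lra|lra|lra|lra]].
    apply Rmult_le_compat_r. apply Rmult_le_pos; [apply Rmult_le_pos; [apply pow2_ge_0|lra]|apply pow2_ge_0].
    apply E_bound; lra. }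
  specialize (K s1 s4k s4r Gb s3).
  set (L := INR (fact n) / (INR (fact k) * INR (fact r)) * a ^ k) in *.
  assert (hL : 0 <= L).
  { unfold L. apply Rmult_le_pos; [|apply pow_le; lra]. pose proof (factR_pos n); pose proof (factR_pos k); pose proof (factR_pos r).
    left. apply Rdiv_lt_0_compat; [lra| apply Rmult_lt_0_compat; lra]. }
  pose proof PI_RGT_0.
  assert (hsa : 0 < sqrt a) by (apply sqrt_lt_R0; lra).
  assert (hsp : 0 < sqrt (2 * PI)) by (apply sqrt_lt_R0; lra).
  assert (hsn : 0 < sqrt (INR n)) by (apply sqrt_lt_R0; lra).
  pose proof (sqrt_sqrt a ltac:(lra)). pose proof (sqrt_sqrt (2 * PI) ltac:(lra)). pose proof (sqrt_sqrt (INR n) ltac:(lra)).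
  assert (hB : 0 < (1 + a) ^ n) by (apply pow_lt; lra).
  unfold Mconst.
  replace ((a + 1) / sqrt a * (1 / (1 - l)) / sqrt (2 * PI) * / sqrt (INR n) * (1 + a) ^ n)
    with (((a + 1) * (1 + a) ^ n) / ((1 - l) * sqrt a * sqrt (2 * PI) * sqrt (INR n))) by (field; lra).
  set (D := (1 - l) * sqrt a * sqrt (2 * PI) * sqrt (INR n)).
  assert (hD : 0 < D) by (unfold D; repeat apply Rmult_lt_0_compat; lra).
  apply Rmult_le_reg_r with D; [exact hD|].
  replace ((a + 1) * (1 + a) ^ n / D * D) with ((a + 1) * (1 + a) ^ n) by (field; lra).
  apply Rsqr_incr_0; [| apply Rmult_le_pos; lra | apply Rmult_le_pos; lra].
  unfold Rsqr.
  replace (L * D * (L * D)) with (L ^ 2 * (2 * PI * INR n * a) * (1 - l) ^ 2).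
  2:{ unfold D. replace (2 * PI * INR n * a) with ((sqrt a * sqrt a) * (sqrt (2 * PI) * sqrt (2 * PI)) * (sqrt (INR n) * sqrt (INR n))) by (rewrite H0, H1, H2; ring). ring. }
  replace ((a + 1) * (1 + a) ^ n * ((a + 1) * (1 + a) ^ n)) with (((a + 1) * (1 + a) ^ n) ^ 2) by ring.
  exact K.
Qed.
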